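(* Let $\mathcal{P}=\mathbb{Z}_{41}\times\mathbb{Z}_{11}$, let $a$ be a primitive element of $\mathbb{Z}_{41}$ and $b$ a primitive element of $\mathbb{Z}_{11}$, and fix $i\in\{1,2,3,4\}$. Define permutations of $\mathcal{P}$ by $\alpha:(e,f)\mapsto(e+1,f)$, $\beta:(e,f)\mapsto(e,f+1)$, $\iota:(e,f)\mapsto(-e,f)$ and $\gamma_i:(e,f)\mapsto(a^8e,b^{2i}f)$. Let $G$ be either $\langle\alpha,\beta,\iota,\gamma_i\rangle$ or $\langle\alpha,\beta,\gamma_i\rangle$. Let $H=\mathrm{AGL}(1,41)\times\mathrm{AGL}(1,11)$ be the group of all permutations of $\mathcal{P}$ of the form $(e,f)\mapsto(ue+s,wf+t)$ with $u\in\mathbb{Z}_{41}\setminus\{0\}$, $s\in\mathbb{Z}_{41}$, $w\in\mathbb{Z}_{11}\setminus\{0\}$, $t\in\mathbb{Z}_{11}$. Then the normaliser of $G$ in $\mathrm{Sym}(\mathcal{P})$ equals $H$. *)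

(* Defs.v *)
From mathcomp Require Import all_boot all_order all_algebra all_fingroup.
Set Implicit Arguments. Unset Strict Implicit. Unset Printing Implicit Defensive.
Import GRing.Theory.
Local Open Scope ring_scope.

(* The point set P = Z_41 x Z_11 (41, 11 prime, so 'F_41 = 'Z_41 etc.). *)
Definition Pt : finType := ('F_41 * 'F_11)%type.

(* Turn a function on Pt into a permutation; if it is not injective we
   fall back to the identity (never used: all maps below are bijections
   under the theorem's hypotheses). *)
Definition fperm (f : Pt -> Pt) : {perm Pt} :=
  match injectiveP f with
  | ReflectT inj => perm inj
  | ReflectF _ => 1%g
  end.

Definition alphaP : {perm Pt} := fperm (fun x => (x.1 + 1, x.2)).
Definition betaP  : {perm Pt} := fperm (fun x => (x.1, x.2 + 1)).
Definition iotaP  : {perm Pt} := fperm (fun x => (- x.1, x.2)).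
Definition gammaP (a : 'F_41) (b : 'F_11) (i : nat) : {perm Pt} :=
  fperm (fun x => (a ^+ 8 * x.1, b ^+ (2 * i) * x.2)).

Definition AGLxAGL : {set {perm Pt}} :=
  [set p : {perm Pt} | [exists u : 'F_41, exists s : 'F_41,
     exists w : 'F_11, exists t : 'F_11,
     (u != 0) && (w != 0) &&
     [forall x : Pt, p x == (u * x.1 + s, w * x.2 + t)]]].

(* Main.v *)
Require Import Defs.
From mathcomp Require Import all_boot all_order all_algebra all_fingroup ring.
Import GRing.Theory.
Local Open Scope ring_scope.

Lemma valF41 (e : 'F_41) : (nat_of_ord e)%:R = e.
Proof. exact: natr_Zp. Qed.
Lemma valF11 (e : 'F_11) : (nat_of_ord e)%:R = e.
Proof. exact: natr_Zp. Qed.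

Lemma fpermE (f : Pt -> Pt) : injective f -> forall x, fperm f x = f x.
Proof.
move=> inj x; rewrite /fperm; case: injectiveP => [i|n]; first by rewrite permE.
by case: n.
Qed.

Definition aff (m1 c : 'F_41) (m2 d : 'F_11) : {perm Pt} :=
  fperm (fun x => (m1 * x.1 + c, m2 * x.2 + d)).

Lemma affE m1 c m2 d : m1 != 0 -> m2 != 0 -> forall x,
  aff m1 c m2 d x = (m1 * x.1 + c, m2 * x.2 + d).
Proof.
move=> h1 h2 x; rewrite /aff fpermE //.
move=> y z /eqP; rewrite xpair_eqE => /andP[/eqP H1 /eqP H2].
have X1 := mulfI h1 (addIr _ H1); have X2 := mulfI h2 (addIr _ H2).
by move: X1 X2; clear; case: y z => [? ?] [? ?] /= -> ->.
Qed.

Lemma aff_mul m1 c m2 d n1 e n2 f : m1 != 0 -> m2 != 0 -> n1 != 0 -> n2 != 0 ->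
  (aff m1 c m2 d * aff n1 e n2 f)%g = aff (n1 * m1) (n1 * c + e) (n2 * m2) (n2 * d + f).
Proof.
move=> h1 h2 h3 h4; apply/permP => x.
rewrite permM !affE ?mulf_neq0 //= !mulrDr !mulrA !addrA.
by [].
Qed.

Lemma aff_inj m1 c m2 d n1 e n2 f : m1 != 0 -> m2 != 0 -> n1 != 0 -> n2 != 0 ->
  aff m1 c m2 d = aff n1 e n2 f -> [/\ m1 = n1, c = e, m2 = n2 & d = f].
Proof.
move=> h1 h2 h3 h4 H.
have := congr1 (fun g : {perm Pt} => g (0, 0)) H; rewrite !affE // => /eqP.
rewrite xpair_eqE /= !mulr0 !add0r => /andP[/eqP Ec /eqP Ed].
have := congr1 (fun g : {perm Pt} => g (1, 1)) H; rewrite !affE // => /eqP.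
rewrite xpair_eqE /= !mulr1 Ec Ed => /andP[/eqP E1 /eqP E2].
by split => //; [exact: addIr E1 | exact: addIr E2].
Qed.

Lemma pair_inj (f1 : 'F_41 -> 'F_41) (f2 : 'F_11 -> 'F_11) :
  injective f1 -> injective f2 -> injective (fun x : Pt => (f1 x.1, f2 x.2)).
Proof.
move=> i1 i2 y z /eqP; rewrite xpair_eqE => /andP[/eqP /i1 H1 /eqP /i2 H2].
by move: H1 H2; clear; case: y z => [? ?] [? ?] /= -> ->.
Qed.

Lemma aff1 : aff 1 0 1 0 = 1%g.
Proof. by apply/permP => x; rewrite affE ?oner_eq0 // perm1 !mul1r !addr0; case: x. Qed.

Lemma aff_exp m1 c m2 d n : m1 != 0 -> m2 != 0 ->
  exists c' d', ((aff m1 c m2 d) ^+ n)%g = aff (m1 ^+ n) c' (m2 ^+ n) d'.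
Proof.
move=> h1 h2; elim: n => [|n [c' [d' IH]]]; first by exists 0, 0; rewrite !expr0 aff1.
exists (m1 ^+ n * c + c'), (m2 ^+ n * d + d').
by rewrite expgS IH aff_mul ?expf_neq0 // !exprSr.
Qed.

Lemma tr_exp c d n : ((aff 1%R c 1%R d) ^+ n)%g = aff 1 (c *+ n) 1 (d *+ n).
Proof.
elim: n => [|n IH]; first by rewrite !mulr0n aff1.
by rewrite expgS IH aff_mul ?oner_eq0 // !mul1r -!mulrS.
Qed.

Lemma alphaE : alphaP = aff 1 1 1 0.
Proof.
apply/permP => x; rewrite affE ?oner_eq0 // /alphaP fpermE ?mul1r ?addr0 //.
apply: (@pair_inj (fun y => y + 1) (fun y => y)); [exact: addIr | by move=> ? ?].
Qed.

Lemma betaE : betaP = aff 1 0 1 1.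
Proof.
apply/permP => x; rewrite affE ?oner_eq0 // /betaP fpermE ?mul1r ?addr0 //.
apply: (@pair_inj (fun y => y) (fun y => y + 1)); [by move=> ? ? | exact: addIr].
Qed.

Lemma iotaE : iotaP = aff (-1) 0 1 0.
Proof.
apply/permP => x; rewrite affE ?oppr_eq0 ?oner_eq0 // /iotaP fpermE ?mul1r ?addr0 ?mulN1r //.
apply: (@pair_inj (fun y => - y) (fun y => y)); [exact: oppr_inj | by move=> ? ?].
Qed.

Lemma gammaE a b i : a ^+ 8 != 0 -> b ^+ (2 * i) != 0 ->
  gammaP a b i = aff (a ^+ 8) 0 (b ^+ (2 * i)) 0.
Proof.
move=> h1 h2; apply/permP => x; rewrite affE // /gammaP fpermE ?addr0 //.
apply: (@pair_inj (fun y => a ^+ 8 * y) (fun y => b ^+ (2 * i) * y)); [exact: mulfI | exact: mulfI].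
Qed.

Definition Sset : {set {perm Pt}} :=
  [set g : {perm Pt} | [exists m1 : 'F_41, exists c : 'F_41, exists m2 : 'F_11,
     exists d : 'F_11, (m1 ^+ 10 == 1) && (m2 ^+ 5 == 1) && (g == aff m1 c m2 d)]].

Lemma SP g : reflect (exists m1 c m2 d,
   [/\ m1 ^+ 10 = 1, m2 ^+ 5 = 1 & g = aff m1 c m2 d]) (g \in Sset).
Proof.
rewrite inE; apply: (iffP idP).
  move=> /existsP[m1 /existsP[c /existsP[m2 /existsP[d /andP[/andP[/eqP h1 /eqP h2] /eqP h3]]]]].
  by exists m1, c, m2, d.
move=> [m1 [c [m2 [d [h1 h2 h3]]]]].
apply/existsP; exists m1; apply/existsP; exists c; apply/existsP; exists m2.
by apply/existsP; exists d; rewrite h1 h2 h3 !eqxx.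
Qed.

Lemma nz41 {m : 'F_41} {k} : m ^+ k.+1 = 1 -> m != 0.
Proof. move=> h; apply/eqP => m0; move: h; rewrite m0 expr0n /= => /eqP; by rewrite eq_sym oner_eq0. Qed.
Lemma nz11 {m : 'F_11} {k} : m ^+ k.+1 = 1 -> m != 0.
Proof. move=> h; apply/eqP => m0; move: h; rewrite m0 expr0n /= => /eqP; by rewrite eq_sym oner_eq0. Qed.

Lemma Sgs : group_set Sset.
Proof.
apply/group_setP; split.
  by apply/SP; exists 1, 0, 1, 0; rewrite !expr1n aff1; split.
move=> g h /SP[m1 [c [m2 [d [h1 h2 ->]]]]] /SP[n1 [e [n2 [f [h3 h4 ->]]]]].
apply/SP; rewrite (@aff_mul m1 c m2 d n1 e n2 f (nz41 h1) (nz11 h2) (nz41 h3) (nz11 h4)).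
by exists (n1 * m1), (n1 * c + e), (n2 * m2), (n2 * d + f); split; [rewrite exprMn h1 h3 mulr1 | rewrite exprMn h2 h4 mulr1 |].
Qed.

Definition SG := Group Sgs.

Lemma key g n : g \in Sset -> (g ^+ n = 1)%g ->
  (forall m : 'F_41, m ^+ 10 = 1 -> m ^+ n = m) ->
  (forall m : 'F_11, m ^+ 5 = 1 -> m ^+ n = m) ->
  exists c d, [/\ g = aff 1 c 1 d, c *+ n = 0 & d *+ n = 0].
Proof.
move=> /SP[m1 [c [m2 [d [h1 h2 Eg]]]]] hn e1 e2.
have nm1 := nz41 h1; have nm2 := nz11 h2.
have [c' [d' E]] := aff_exp m1 c m2 d n nm1 nm2.
have H := hn; rewrite Eg E -aff1 in H.
have [A _ B _] := @aff_inj _ _ _ _ _ _ _ _ (expf_neq0 n nm1) (expf_neq0 n nm2) (oner_neq0 _) (oner_neq0 _) H.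
rewrite e1 // in A; rewrite e2 // in B.
rewrite A B in Eg; exists c, d; split => //.
  by move: hn; rewrite Eg tr_exp -aff1 => /(@aff_inj _ _ _ _ _ _ _ _ (oner_neq0 _) (oner_neq0 _) (oner_neq0 _) (oner_neq0 _)) [].
by move: hn; rewrite Eg tr_exp -aff1 => /(@aff_inj _ _ _ _ _ _ _ _ (oner_neq0 _) (oner_neq0 _) (oner_neq0 _) (oner_neq0 _)) [].
Qed.

Lemma Ncoord (p : {perm Pt}) c0 d1 :
  (forall x, p (x.1 + 1, x.2) = ((p x).1 + c0, (p x).2)) ->
  (forall x, p (x.1, x.2 + 1) = ((p x).1, (p x).2 + d1)) ->
  forall x, p x = (c0 * x.1 + (p (0,0)).1, d1 * x.2 + (p (0,0)).2).
Proof.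
move=> Ea Eb.
have L1 n y : p (n%:R, y) = ((p (0,y)).1 + c0 * n%:R, (p (0,y)).2).
  elim: n => [|n IH]; first by rewrite mulr0 addr0; case: (p (0,y)).
  have E := Ea (n%:R, y); rewrite /= in E.
  by rewrite mulrSr E IH /= mulrDr mulr1 addrA.
have L2 m y : p (y, m%:R) = ((p (y,0)).1, (p (y,0)).2 + d1 * m%:R).
  elim: m => [|m IH]; first by rewrite mulr0 addr0; case: (p (y,0)).
  have E := Eb (y, m%:R); rewrite /= in E.
  by rewrite mulrSr E IH /= mulrDr mulr1 addrA.
move=> [e f] /=.
have := L1 (nat_of_ord e) f; rewrite valF41 => ->.
have := L2 (nat_of_ord f) 0; rewrite valF11 => -> /=.
by rewrite addrC [d1 * _ + _]addrC.
Qed.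

Lemma conj_aff (g h q : {perm Pt}) : (q * h = g * q)%g -> (g ^ q)%g = h.
Proof. by move=> H; rewrite conjgE -H mulKg. Qed.

Lemma normgen (A : {set {perm Pt}}) x :
  (forall g, g \in A -> (g ^ x)%g \in <<A>>%g) -> x \in 'N(<<A>>)%g.
Proof.
move=> H; rewrite inE -genJ gen_subG; apply/subsetP => y.
by rewrite mem_conjg => /H; rewrite conjgKV.
Qed.

Lemma F41_41 : (1 *+ 41 : 'F_41) = 0. Proof. by apply/eqP. Qed.
Lemma F11_11 : (1 *+ 11 : 'F_11) = 0. Proof. by apply/eqP. Qed.
Lemma F11_41 {d : 'F_11} : d *+ 41 = 0 -> d = 0.
Proof.
move=> /eqP; rewrite -mulr_natr mulf_eq0 (negbTE (_ : 41%:R != 0 :> 'F_11)) ?orbF //.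
by move=> /eqP.
Qed.
Lemma F41_11 {d : 'F_41} : d *+ 11 = 0 -> d = 0.
Proof.
move=> /eqP; rewrite -mulr_natr mulf_eq0 (negbTE (_ : 11%:R != 0 :> 'F_41)) ?orbF //.
by move=> /eqP.
Qed.

Lemma e41a (m : 'F_41) : m ^+ 10 = 1 -> m ^+ 41 = m.
Proof. by move=> h; rewrite (_ : m ^+ 41 = m ^+ (1 + 10 * 4)%N) // exprD exprM h expr1n mulr1 expr1. Qed.
Lemma e41b (m : 'F_11) : m ^+ 5 = 1 -> m ^+ 41 = m.
Proof. by move=> h; rewrite (_ : m ^+ 41 = m ^+ (1 + 5 * 8)%N) // exprD exprM h expr1n mulr1 expr1. Qed.
Lemma e11a (m : 'F_41) : m ^+ 10 = 1 -> m ^+ 11 = m.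
Proof. by move=> h; rewrite (_ : m ^+ 11 = m ^+ (1 + 10 * 1)%N) // exprD exprM h expr1n mulr1 expr1. Qed.
Lemma e11b (m : 'F_11) : m ^+ 5 = 1 -> m ^+ 11 = m.
Proof. by move=> h; rewrite (_ : m ^+ 11 = m ^+ (1 + 5 * 2)%N) // exprD exprM h expr1n mulr1 expr1. Qed.

Lemma main_gen (A : {set {perm Pt}}) :
  alphaP \in A -> betaP \in A -> A \subset Sset ->
  (forall u s w t, u != 0 -> w != 0 -> forall g, g \in A ->
      (g ^ aff u s w t)%g \in <<A>>%g) ->
  'N(<<A>>)%g = AGLxAGL.
Proof.
move=> alA beA AS Hconj.
apply/setP => p; apply/idP/idP.
  move=> pN.
  have GS : <<A>>%g \subset SG by rewrite gen_subG.
  have alG : alphaP \in <<A>>%g := mem_gen alA.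
  have beG : betaP \in <<A>>%g := mem_gen beA.
  have alpG : (alphaP ^ p)%g \in <<A>>%g by rewrite memJ_norm.
  have bepG : (betaP ^ p)%g \in <<A>>%g by rewrite memJ_norm.
  have pa : ((alphaP ^ p) ^+ 41 = 1)%g.
    by rewrite -conjXg alphaE tr_exp F41_41 mul0rn aff1 conj1g.
  have pb : ((betaP ^ p) ^+ 11 = 1)%g.
    by rewrite -conjXg betaE tr_exp F11_11 mul0rn aff1 conj1g.
  have [c0 [d0 [Ea _ Ed]]] := @key _ 41 (subsetP GS _ alpG) pa e41a e41b.
  have [c1 [d1 [Eb Ec _]]] := @key _ 11 (subsetP GS _ bepG) pb e11a e11b.
  rewrite (F11_41 Ed) in Ea; rewrite (F41_11 Ec) in Eb.
  have Sa x : p (x.1 + 1, x.2) = ((p x).1 + c0, (p x).2).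
    have E := congr1 (fun g : {perm Pt} => g x) (conjgC alphaP p).
    cbv beta in E; rewrite Ea !permM alphaE !affE ?oner_eq0 // !mul1r !addr0 in E.
    exact: E.
  have Sb x : p (x.1, x.2 + 1) = ((p x).1, (p x).2 + d1).
    have E := congr1 (fun g : {perm Pt} => g x) (conjgC betaP p).
    cbv beta in E; rewrite Eb !permM betaE !affE ?oner_eq0 // !mul1r !addr0 in E.
    exact: E.
  have F := @Ncoord p c0 d1 Sa Sb.
  have c0nz : c0 != 0.
    apply/eqP => c00; move: Ea; rewrite c00 aff1 => /eqP; rewrite conjg_eq1 => /eqP a1.
    have := congr1 (fun g : {perm Pt} => g (0, 0)) a1.
    rewrite alphaE affE ?oner_eq0 // perm1 => /eqP; by rewrite xpair_eqE.
  have d1nz : d1 != 0.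
    apply/eqP => d10; move: Eb; rewrite d10 aff1 => /eqP; rewrite conjg_eq1 => /eqP a1.
    have := congr1 (fun g : {perm Pt} => g (0, 0)) a1.
    rewrite betaE affE ?oner_eq0 // perm1 => /eqP; by rewrite xpair_eqE.
  rewrite inE; apply/existsP; exists c0; apply/existsP; exists (p (0,0)).1.
  apply/existsP; exists d1; apply/existsP; exists (p (0,0)).2.
  by rewrite c0nz d1nz /=; apply/forallP => x; rewrite F.
rewrite inE => /existsP[u /existsP[s /existsP[w /existsP[t /andP[/andP[un wn] /forallP Hp]]]]].
have -> : p = aff u s w t by apply/permP => x; rewrite affE // (eqP (Hp x)).
by apply: normgen => g gA; apply: Hconj.
Qed.

Lemma trG (K : {group {perm Pt}}) c d : alphaP \in K -> betaP \in K -> aff 1 c 1 d \in K.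
Proof.
move=> aK bK.
have -> : aff 1 c 1 d = (alphaP ^+ (nat_of_ord c) * betaP ^+ (nat_of_ord d))%g :> {perm Pt}.
  rewrite alphaE betaE !tr_exp aff_mul ?oner_eq0 // !mul1r !mul0rn addr0 add0r.
  by rewrite valF41 valF11.
by rewrite groupM ?groupX.
Qed.

Section Conj.
Variables (u s : 'F_41) (w t : 'F_11).
Hypotheses (un : u != 0) (wn : w != 0).

Lemma cA : (alphaP ^ aff u s w t)%g = aff 1 u 1 0.
Proof.
apply: conj_aff; apply/permP => x; rewrite !permM alphaE !affE ?oner_eq0 //.
by congr (_, _); rewrite /=; ring.
Qed.

Lemma cB : (betaP ^ aff u s w t)%g = aff 1 0 1 w.
Proof.
apply: conj_aff; apply/permP => x; rewrite !permM betaE !affE ?oner_eq0 //.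
by congr (_, _); rewrite /=; ring.
Qed.

Lemma cI : (iotaP ^ aff u s w t)%g = (iotaP * aff 1%R (s + s) 1%R 0%R)%g.
Proof.
rewrite iotaE aff_mul ?oner_eq0 ?oppr_eq0 //.
apply: conj_aff; apply/permP => x; rewrite !permM !affE ?oner_eq0 ?oppr_eq0 ?mulf_neq0 //.
by congr (_, _); rewrite /=; ring.
Qed.

Lemma cG (a : 'F_41) (b : 'F_11) i : a ^+ 8 != 0 -> b ^+ (2 * i) != 0 ->
  (gammaP a b i ^ aff u s w t)%g =
  (gammaP a b i * aff 1%R (s - a ^+ 8 * s)%R 1%R (t - b ^+ (2 * i) * t)%R)%g.
Proof.
move=> h1 h2; rewrite (@gammaE a b i h1 h2) aff_mul ?oner_eq0 // !mul1r.
apply: conj_aff; apply/permP => x; rewrite !permM !affE ?oner_eq0 //.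
by congr (_, _); rewrite /=; ring.
Qed.
End Conj.

Theorem lemma5p1 (a : 'F_41) (b : 'F_11) (i : nat)
  (ha : 40.-primitive_root a) (hb : 10.-primitive_root b)
  (hi : (1 <= i <= 4)%N) (G : {set {perm Pt}}) :
  G = <<[set alphaP; betaP; iotaP; gammaP a b i]>>%g \/
  G = <<[set alphaP; betaP; gammaP a b i]>>%g ->
  'N(G)%g = AGLxAGL.
Proof.
have a40 : a ^+ 40 = 1 := prim_expr_order ha.
have b10 : b ^+ 10 = 1 := prim_expr_order hb.
have a8 : (a ^+ 8) ^+ 10 = 1.
  by rewrite -exprM (_ : (8 * 10 = 40 * 2)%N) // exprM a40 expr1n.
have b2i : (b ^+ (2 * i)) ^+ 5 = 1.
  rewrite -exprM (_ : (2 * i * 5 = 10 * i)%N); last by rewrite mulnAC.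
  by rewrite exprM b10 expr1n.
have a8nz := nz41 a8; have b2nz := nz11 b2i.
have alS : alphaP \in Sset by apply/SP; exists 1, 1, 1, 0; rewrite alphaE !expr1n.
have beS : betaP \in Sset by apply/SP; exists 1, 0, 1, 1; rewrite betaE !expr1n.
have ioS : iotaP \in Sset.
  apply/SP; exists (-1), 0, 1, 0; rewrite iotaE expr1n; split => //.
  by rewrite (_ : 10 = 2 * 5)%N // exprM sqrrN !expr1n.
have gaS : gammaP a b i \in Sset.
  by apply/SP; exists (a ^+ 8), 0, (b ^+ (2 * i)), 0; rewrite gammaE.
move=> [->|->]; apply: main_gen; rewrite ?inE ?eqxx ?orbT //.
- by apply/subsetP => g H; rewrite !inE in H; case/orP: H => [/orP[/orP[|]|]|] /eqP ->.
- move=> u s w t un wn g; rewrite !inE => /orP[/orP[/orP[|]|]|] /eqP ->.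
  + by rewrite cA // trG // mem_gen // !inE eqxx ?orbT.
  + by rewrite cB // trG // mem_gen // !inE eqxx ?orbT.
  + by rewrite cI // groupM ?trG // mem_gen // !inE eqxx ?orbT.
  + by rewrite cG // groupM ?trG // mem_gen // !inE eqxx ?orbT.
- by apply/subsetP => g H; rewrite !inE in H; case/orP: H => [/orP[|]|] /eqP ->.
- move=> u s w t un wn g; rewrite !inE => /orP[/orP[|]|] /eqP ->.
  + by rewrite cA // trG // mem_gen // !inE eqxx ?orbT.
  + by rewrite cB // trG // mem_gen // !inE eqxx ?orbT.
  + by rewrite cG // groupM ?trG // mem_gen // !inE eqxx ?orbT.
Qed.
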